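(* Let $\alpha_1,\nu_1,\alpha_2,\nu_2,\omega_1,\omega_2,\xi_1,\xi_2$ be positive real numbers. Define, for $h\ge 0$, $$\widetilde{\varphi}_{\mathcal{CM}}(h)=\omega_1\,\frac{\gamma\big(\nu_1/2,(h^2+\alpha_1)\xi_1\big)}{\Gamma(\nu_1/2)}\,\varphi_{\mathcal{C}}(h;\alpha_1,\nu_1)+\omega_2\left[\varphi_{\mathcal{M}}(h;\alpha_2,\nu_2)-\frac{1}{\Gamma(\nu_2)}\,\Gamma\!\left(\nu_2;\frac{1}{4\xi_2\alpha_2^2};\frac{h^2}{4\alpha_2^2}\right)\right].$$ Then $\widetilde{\varphi}_{\mathcal{CM}}$ is positive definite in $\mathbb{R}^d$ for every $d\in\mathbb{N}$, i.e. for every $d,k\in\mathbb{N}$, all $a_1,\dots,a_k\in\mathbb{R}$ and all $\mathbf{s}_1,\dots,\mathbf{s}_k\in\mathbb{R}^d$, $\sum_{i,j=1}^k a_ia_j\,\widetilde{\varphi}_{\mathcal{CM}}(\|\mathbf{s}_i-\mathbf{s}_j\|)\ge 0$.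
   Context: $\Gamma$ denotes the gamma function. The lower incomplete gamma function is $\gamma(a,x)=\int_0^x t^{a-1}e^{-t}\,dt$ for $a>0,x\ge0$. The generalized incomplete gamma function is $\Gamma(a;b;c)=\int_b^\infty t^{a-1}\exp(-t-c\,t^{-1})\,dt$ for $a>0$, $b>0$, $c\ge 0$. The Matérn function is $\varphi_{\mathcal{M}}(h;\alpha,\nu)=\frac{2^{1-\nu}}{\Gamma(\nu)}(h/\alpha)^\nu K_\nu(h/\alpha)$ for $h>0$, with $\varphi_{\mathcal{M}}(0;\alpha,\nu)=1$ (continuous extension), where $K_\nu$ is the modified Bessel function of the second kind and $\alpha,\nu>0$. The Cauchy function is $\varphi_{\mathcal{C}}(h;\alpha,\nu)=(1+h^2/\alpha)^{-\nu/2}$, $h\ge0$, $\alpha,\nu>0$. *)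

(* Defs.v *)
From Stdlib Require Import Reals.
From Coquelicot Require Import Coquelicot.
Open Scope R_scope.

Definition ch (t : R) : R := (exp t + exp (- t)) / 2.

Definition Gamma_fun (a : R) : R :=
  RInt_gen (fun t => Rpower t (a - 1) * exp (- t)) (at_right 0) (Rbar_locally p_infty).

Definition lower_gamma (a x : R) : R :=
  RInt_gen (fun t => Rpower t (a - 1) * exp (- t)) (at_right 0) (at_point x).

Definition gen_inc_gamma (a b c : R) : R :=
  RInt_gen (fun t => Rpower t (a - 1) * exp (- t - c / t)) (at_point b) (Rbar_locally p_infty).

(* modified Bessel function of the second kind, for x > 0:
   K_nu(x) = int_0^oo exp(-x cosh t) cosh(nu t) dt  (DLMF 10.32.9) *)
Definition BesselK (nu x : R) : R :=
  RInt_gen (fun t => exp (- x * ch t) * ch (nu * t)) (at_point 0) (Rbar_locally p_infty).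

(* Matern function, with continuous extension 1 at h = 0 *)
Definition matern (h alpha nu : R) : R :=
  if Req_EM_T h 0 then 1
  else Rpower 2 (1 - nu) / Gamma_fun nu * Rpower (h / alpha) nu * BesselK nu (h / alpha).

Definition cauchy (h alpha nu : R) : R := Rpower (1 + h ^ 2 / alpha) (- nu / 2).

Definition phiCM (a1 n1 a2 n2 w1 w2 x1 x2 : R) (h : R) : R :=
  w1 * (lower_gamma (n1 / 2) ((h ^ 2 + a1) * x1) / Gamma_fun (n1 / 2)) * cauchy h a1 n1
  + w2 * (matern h a2 n2
          - / Gamma_fun n2 * gen_inc_gamma n2 (/ (4 * x2 * a2 ^ 2)) (h ^ 2 / (4 * a2 ^ 2))).

Fixpoint fsum (n : nat) (f : nat -> R) : R :=
  match n with O => 0 | S m => fsum m f + f m end.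

Definition eucl_dist (d : nat) (x y : nat -> R) : R :=
  sqrt (fsum d (fun l => (x l - y l) ^ 2)).

(* Main.v *)
Require Import Defs.
From Stdlib Require Import Reals.
From Coquelicot Require Import Coquelicot.
From Stdlib Require Import Lra Lia.
Open Scope R_scope.

Lemma fsum_plus n f g : fsum n (fun i => f i + g i) = fsum n f + fsum n g.
Proof. induction n; simpl; [lra| rewrite IHn; lra]. Qed.
Lemma fsum_scal n c f : fsum n (fun i => c * f i) = c * fsum n f.
Proof. induction n; simpl; [lra| rewrite IHn; lra]. Qed.
Lemma fsum_ext n f g : (forall i, f i = g i) -> fsum n f = fsum n g.
Proof. intros H; induction n; simpl; [lra| rewrite IHn, H; lra]. Qed.
Lemma fsum_nonneg n f : (forall i, 0 <= f i) -> 0 <= fsum n f.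
Proof. intros H; induction n; simpl; [lra| specialize (H n); lra]. Qed.

Definition PDK (k : nat) (K : nat -> nat -> R) :=
  forall b : nat -> R, 0 <= fsum k (fun i => fsum k (fun j => b i * b j * K i j)).

Lemma PDK_ones k : PDK k (fun _ _ => 1).
Proof.
  intros b.
  rewrite (fsum_ext k _ (fun i => b i * fsum k b)).
  - rewrite (fsum_ext k _ (fun i => fsum k b * b i)) by (intros; ring).
    rewrite fsum_scal. nra.
  - intros i. rewrite <- fsum_scal. apply fsum_ext. intros; ring.
Qed.

Lemma PDK_scale k K u : PDK k K -> PDK k (fun i j => u i * u j * K i j).
Proof.
  intros H b. specialize (H (fun i => b i * u i)).
  erewrite fsum_ext; [exact H|]. intros i; simpl. apply fsum_ext; intros; ring.
Qed.

Lemma lim_fsum k (f : nat -> nat -> R) (l : nat -> R) :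
  (forall i, is_lim_seq (fun N => f N i) (l i)) ->
  is_lim_seq (fun N => fsum k (f N)) (fsum k l).
Proof.
  intros H; induction k; simpl.
  - apply is_lim_seq_const.
  - apply (is_lim_seq_plus' _ _ _ _ IHk (H k)).
Qed.

Definition Ep (N : nat) (z : R) := sum_n (fun n => scal (pow_n z n) (/ INR (Factorial.fact n))) N.

Lemma Ep_lim z : is_lim_seq (fun N => Ep N z) (exp z).
Proof. exact (is_exp_Reals z). Qed.

Lemma sum_n_nonneg (g : nat -> R) N : (forall n, 0 <= g n) -> 0 <= sum_n g N.
Proof.
  intros H; induction N.
  - rewrite sum_O; auto.
  - rewrite sum_Sn. change (plus (sum_n g N) (g (S N))) with (sum_n g N + g (S N)).
    specialize (H (S N)); lra.
Qed.

Lemma PDK_expmul k K x c : 0 <= c -> PDK k K ->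
  PDK k (fun i j => K i j * exp (c * x i * x j)).
Proof.
  intros Hc HK b.
  set (u := fun N => fsum k (fun i => fsum k (fun j => b i * b j * (K i j * Ep N (c * x i * x j))))).
  assert (Hl : is_lim_seq u (fsum k (fun i => fsum k (fun j => b i * b j * (K i j * exp (c * x i * x j)))))).
  { unfold u. apply lim_fsum. intros i. apply lim_fsum. intros j.
    pose proof (is_lim_seq_scal_l _ (b i * b j * K i j) _ (Ep_lim (c * x i * x j))) as H.
    replace (Finite (b i * b j * (K i j * exp (c * x i * x j)))) with
      (Rbar_mult (b i * b j * K i j) (exp (c * x i * x j))) by (simpl; f_equal; ring).
    eapply is_lim_seq_ext; [|exact H]. intros; simpl; ring. }
  assert (Hu : forall N, u N = sum_n (fun n => / INR (Factorial.fact n) * c ^ n *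
     fsum k (fun i => fsum k (fun j => (b i * x i ^ n) * (b j * x j ^ n) * K i j))) N).
  { intros N; unfold u; induction N.
    - rewrite sum_O. unfold Ep. rewrite <- fsum_scal. apply fsum_ext; intros i.
      rewrite <- fsum_scal. apply fsum_ext; intros j. rewrite sum_O.
      change (scal (pow_n (c * x i * x j) 0) (/ INR (Factorial.fact 0))) with (1 * / 1).
      simpl. field.
    - rewrite sum_Sn. rewrite <- IHN.
      change (plus ?a ?b) with (a + b).
      rewrite <- fsum_scal, <- fsum_plus. apply fsum_ext; intros i.
      rewrite <- fsum_scal, <- fsum_plus. apply fsum_ext; intros j.
      unfold Ep. rewrite sum_Sn. change (plus ?a ?b) with (a + b).
      change (scal ?a ?b) with (a * b). rewrite pow_n_pow.
      rewrite !Rpow_mult_distr. ring. }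
  assert (Hn : forall N, 0 <= u N).
  { intros N; rewrite Hu. apply sum_n_nonneg. intros n.
    apply Rmult_le_pos.
    - apply Rmult_le_pos. apply Rlt_le, Rinv_0_lt_compat, lt_0_INR, Factorial.lt_O_fact.
      apply pow_le; auto.
    - apply (HK (fun i => b i * x i ^ n)). }
  pose proof (is_lim_seq_le (fun _ => 0) u 0 _ Hn (is_lim_seq_const 0) Hl) as H.
  simpl in H. exact H.
Qed.

Lemma PDK_ext k K K' : (forall i j, K i j = K' i j) -> PDK k K -> PDK k K'.
Proof.
  intros E H b. erewrite fsum_ext; [apply (H b)|]. intros i; apply fsum_ext; intros j.
  rewrite E; auto.
Qed.

Lemma PDK_gauss_step k K x t : 0 <= t -> PDK k K ->
  PDK k (fun i j => K i j * exp (- t * (x i - x j) ^ 2)).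
Proof.
  intros Ht HK.
  apply (PDK_ext k (fun i j => exp (- t * x i ^ 2) * exp (- t * x j ^ 2) *
            (K i j * exp ((2 * t) * x i * x j)))).
  - intros i j. rewrite <- !Rmult_assoc. rewrite (Rmult_comm _ (K i j)).
    rewrite !Rmult_assoc. f_equal. rewrite <- !exp_plus. f_equal. ring.
  - apply PDK_scale. apply PDK_expmul; auto. lra.
Qed.

Lemma PDK_gauss_fsum d k (s : nat -> nat -> R) t : 0 <= t ->
  PDK k (fun i j => exp (- t * fsum d (fun l => (s i l - s j l) ^ 2))).
Proof.
  intros Ht; induction d; cbn [fsum].
  - apply (PDK_ext k (fun _ _ => 1)). intros; rewrite Rmult_0_r, exp_0; auto.
    apply PDK_ones.
  - apply (PDK_ext k (fun i j => exp (- t * fsum d (fun l => (s i l - s j l) ^ 2)) *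
                  exp (- t * (s i d - s j d) ^ 2))).
    + intros i j. rewrite <- exp_plus. f_equal. ring.
    + apply PDK_gauss_step; auto.
Qed.

Lemma eucl_dist_sq d x y : eucl_dist d x y ^ 2 = fsum d (fun l => (x l - y l) ^ 2).
Proof.
  unfold eucl_dist. rewrite <- Rsqr_pow2. apply Rsqr_sqrt.
  apply fsum_nonneg. intros; apply pow2_ge_0.
Qed.

Lemma eucl_dist_nonneg d x y : 0 <= eucl_dist d x y.
Proof. apply sqrt_pos. Qed.

Lemma PDK_gauss d k (s : nat -> nat -> R) t : 0 <= t ->
  PDK k (fun i j => exp (- t * eucl_dist d (s i) (s j) ^ 2)).
Proof.
  intros Ht. eapply PDK_ext; [|apply (PDK_gauss_fsum d k s t Ht)].
  intros; cbv beta. rewrite eucl_dist_sq; auto.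
Qed.

Definition PD (f : R -> R) := forall (d k : nat) (a : nat -> R) (s : nat -> nat -> R),
  0 <= fsum k (fun i => fsum k (fun j => a i * a j * f (eucl_dist d (s i) (s j)))).

Lemma PD_ext f g : (forall h, 0 <= h -> f h = g h) -> PD f -> PD g.
Proof.
  intros E H d k a s. erewrite fsum_ext; [apply (H d k a s)|]. intros i; apply fsum_ext; intros j.
  rewrite E; auto. apply eucl_dist_nonneg.
Qed.

Lemma PD_plus f g : PD f -> PD g -> PD (fun h => f h + g h).
Proof.
  intros Hf Hg d k a s.
  erewrite fsum_ext.
  2:{ intros i. rewrite <- fsum_plus. apply fsum_ext. intros j. rewrite Rmult_plus_distr_l. reflexivity. }
  rewrite fsum_plus. specialize (Hf d k a s). specialize (Hg d k a s). lra.
Qed.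

Lemma PD_scal c f : 0 <= c -> PD f -> PD (fun h => c * f h).
Proof.
  intros Hc Hf d k a s.
  erewrite fsum_ext.
  2:{ intros i. rewrite <- fsum_scal. apply fsum_ext. intros j.
      replace (a i * a j * (c * f (eucl_dist d (s i) (s j)))) with
        (c * (a i * a j * f (eucl_dist d (s i) (s j)))) by ring. reflexivity. }
  rewrite fsum_scal. apply Rmult_le_pos; auto.
Qed.

Lemma is_RInt_gen_zero Fa Fb {FFa : Filter Fa} {FFb : Filter Fb} :
  is_RInt_gen (fun _ => 0) Fa Fb 0.
Proof.
  assert (H := is_RInt_gen_Derive (Fa:=Fa) (Fb:=Fb) (fun _ => 0) 0 0).
  rewrite Rminus_0_r in H.
  eapply is_RInt_gen_ext; [| apply H].
  - apply filter_forall. intros; rewrite Derive_const; auto.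
  - apply filter_forall. intros; apply ex_derive_const.
  - apply filter_forall. intros. apply continuous_ext with (fun _ => 0).
    intros; rewrite Derive_const; auto. apply continuous_const.
  - apply filterlim_const.
  - apply filterlim_const.
Qed.

Lemma is_RInt_gen_fsum Fa Fb {FFa : Filter Fa} {FFb : Filter Fb} n (F : nat -> R -> R) l :
  (forall i, is_RInt_gen (F i) Fa Fb (l i)) ->
  is_RInt_gen (fun x => fsum n (fun i => F i x)) Fa Fb (fsum n l).
Proof.
  intros H; induction n as [|n IHn]; cbn [fsum].
  - apply (@is_RInt_gen_zero Fa Fb FFa FFb).
  - apply (is_RInt_gen_plus _ _ _ _ IHn (H n)).
Qed.

Lemma is_RInt_gen_scal' Fa Fb {FFa : Filter Fa} {FFb : Filter Fb} c f l :
  is_RInt_gen f Fa Fb l -> is_RInt_gen (fun x => c * f x) Fa Fb (c * l).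
Proof. intros H; apply (is_RInt_gen_scal _ c _ H). Qed.

Lemma is_RInt_gen_ge0 Fa Fb {FFa : ProperFilter Fa} {FFb : ProperFilter Fb} f l :
  filter_prod Fa Fb (fun ab => fst ab <= snd ab) ->
  filter_prod Fa Fb (fun ab => forall x, fst ab <= x <= snd ab -> 0 <= f x) ->
  is_RInt_gen f Fa Fb l -> 0 <= l.
Proof.
  intros Hle Hpos H.
  assert (H0 := RInt_gen_norm (V := R_CompleteNormedModule) (fun _ => 0) f 0 l Hle).
  eapply Rle_trans; [|apply H0; auto]. apply (@norm_ge_0 R_AbsRing R_NormedModule).
  - eapply filter_imp; [|exact Hpos]. intros [a b] Hx x Hxx. simpl.
    change (Rabs 0 <= f x). rewrite Rabs_R0. apply Hx; auto.
  - apply (@is_RInt_gen_zero Fa Fb _ _).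
Qed.

Lemma mixture Fa Fb {FFa : ProperFilter Fa} {FFb : ProperFilter Fb} (w g f : R -> R) :
  filter_prod Fa Fb (fun ab => fst ab <= snd ab) ->
  filter_prod Fa Fb (fun ab => forall x, fst ab <= x <= snd ab -> 0 <= w x /\ 0 <= g x) ->
  (forall h, 0 <= h -> is_RInt_gen (fun x => w x * exp (- g x * h ^ 2)) Fa Fb (f h)) ->
  PD f.
Proof.
  intros Hle Hpos Hf d k a s.
  set (D := fun i j => eucl_dist d (s i) (s j)).
  assert (H : is_RInt_gen (fun x => fsum k (fun i => fsum k (fun j =>
                  a i * a j * (w x * exp (- g x * D i j ^ 2))))) Fa Fb
              (fsum k (fun i => fsum k (fun j => a i * a j * f (D i j))))).
  { apply (@is_RInt_gen_fsum Fa Fb (@filter_filter _ _ FFa) (@filter_filter _ _ FFb)). intros i.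
    apply (@is_RInt_gen_fsum Fa Fb (@filter_filter _ _ FFa) (@filter_filter _ _ FFb)). intros j.
    apply (@is_RInt_gen_scal' Fa Fb (@filter_filter _ _ FFa) (@filter_filter _ _ FFb)). apply Hf. apply eucl_dist_nonneg. }
  refine (@is_RInt_gen_ge0 Fa Fb FFa FFb _ _ Hle _ H).
  eapply filter_imp; [|exact Hpos]. intros [u v] Hx x Hxx. cbv beta.
  destruct (Hx x Hxx) as [Hw Hg].
  rewrite (fsum_ext k _ (fun i => w x * fsum k (fun j => a i * a j * exp (- g x * D i j ^ 2)))).
  - rewrite fsum_scal. apply Rmult_le_pos; auto.
    apply (PDK_gauss d k s (g x) Hg a).
  - intros i. rewrite <- fsum_scal. apply fsum_ext; intros j. ring.
Qed.

Lemma gen_of_RInt Fa Fb {FFa : Filter Fa} {FFb : Filter Fb} (f : R -> R) l :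
  filter_prod Fa Fb (fun ab => ex_RInt f (fst ab) (snd ab)) ->
  filterlim (fun ab => RInt f (fst ab) (snd ab)) (filter_prod Fa Fb) (locally l) ->
  is_RInt_gen f Fa Fb l.
Proof.
  intros Hex Hlim. unfold is_RInt_gen.
  apply filterlimi_lim_ext_loc with (fun ab => RInt f (fst ab) (snd ab)); auto.
  generalize Hex; apply filter_imp. intros ab Hab; exact (RInt_correct f _ _ Hab).
Qed.

Lemma RInt_of_gen Fa Fb {FFa : Filter Fa} {FFb : Filter Fb} (f : R -> R) l :
  is_RInt_gen f Fa Fb l ->
  filter_prod Fa Fb (fun ab => ex_RInt f (fst ab) (snd ab)) /\
  filterlim (fun ab => RInt f (fst ab) (snd ab)) (filter_prod Fa Fb) (locally l).
Proof.
  intros H. unfold is_RInt_gen, filterlimi, filter_le, filtermapi in H. split.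
  - specialize (H (fun _ => True) (filter_true)).
    generalize H; apply filter_imp. intros ab [y [Hy _]]. exists y; auto.
  - intros P HP. specialize (H P HP). unfold filtermap.
    revert H; apply filter_imp. intros ab [y [Hy Py]].
    rewrite (is_RInt_unique _ _ _ _ Hy). auto.
Qed.

Lemma fp_point {G : (R -> Prop) -> Prop} {FG : Filter G} b (P : R * R -> Prop) :
  filter_prod (at_point b) G P <-> G (fun y => P (b, y)).
Proof.
  split.
  - intros [Q R HQ HR HP]. generalize HR; apply filter_imp. intros y Hy. apply HP; auto.
  - intros H. exists (fun x => x = b) (fun y => P (b, y)); auto.
    reflexivity. intros x y -> Hy; auto.
Qed.

Lemma fp_point_lim {G : (R -> Prop) -> Prop} {FG : Filter G} b (h : R * R -> R) l :
  filterlim h (filter_prod (at_point b) G) (locally l) <->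
  filterlim (fun y => h (b, y)) G (locally l).
Proof.
  unfold filterlim, filter_le, filtermap. split.
  - intros H P HP. apply (fp_point b (fun ab => P (h ab))). apply H; auto.
  - intros H P HP. apply (fp_point b (fun ab => P (h ab))). apply H; auto.
Qed.

Lemma gen_subst Fa Fb Ga Gb {FFa : Filter Fa} {FFb : Filter Fb} {FGa : Filter Ga} {FGb : Filter Gb}
  (f phi dphi : R -> R) l :
  filterlim phi Fa Ga -> filterlim phi Fb Gb ->
  filter_prod Fa Fb (fun ab => forall x, Rmin (fst ab) (snd ab) <= x <= Rmax (fst ab) (snd ab) ->
      continuous f (phi x) /\ is_derive phi x (dphi x) /\ continuous dphi x) ->
  is_RInt_gen f Ga Gb l ->
  is_RInt_gen (fun y => dphi y * f (phi y)) Fa Fb l.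
Proof.
  intros Ha Hb Hreg H.
  destruct (@RInt_of_gen Ga Gb FGa FGb f l H) as [_ Hlim].
  apply (@gen_of_RInt Fa Fb FFa FFb).
  - generalize Hreg; apply filter_imp. intros [a b] Hx. simpl in Hx |- *.
    eexists. apply (is_RInt_comp f phi dphi a b); intros x Hxx; apply Hx; auto.
  - apply filterlim_ext_loc with (fun ab => RInt f (phi (fst ab)) (phi (snd ab))).
    + generalize Hreg; apply filter_imp. intros [a b] Hx. simpl in Hx |- *.
      symmetry. apply (RInt_comp f phi dphi a b); intros x Hxx; apply Hx; auto.
    + apply filterlim_comp with (G := filter_prod Ga Gb)
        (f := fun ab => (phi (fst ab), phi (snd ab))) (g := fun ab => RInt f (fst ab) (snd ab)); auto.
      apply filterlim_pair.
      * eapply filterlim_comp; [apply filterlim_fst | exact Ha].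
      * eapply filterlim_comp; [apply filterlim_snd | exact Hb].
Qed.

Lemma RInt_abs_dom (f g : R -> R) u v :
  ex_RInt f u v -> ex_RInt g u v ->
  (forall t, Rmin u v < t < Rmax u v -> 0 <= f t <= g t) ->
  Rabs (RInt f u v) <= Rabs (RInt g u v).
Proof.
  intros Hf Hg H.
  destruct (Rle_or_lt u v) as [Huv|Huv].
  - rewrite Rmin_left, Rmax_right in H by lra.
    assert (0 <= RInt f u v) by (apply RInt_ge_0; [lra|auto|intros x Hx; apply H; lra]).
    assert (RInt f u v <= RInt g u v) by (apply RInt_le; [lra|auto|auto|intros x Hx; apply H; lra]).
    rewrite !Rabs_pos_eq; lra.
  - rewrite Rmin_right, Rmax_left in H by lra.
    apply ex_RInt_swap in Hf. apply ex_RInt_swap in Hg.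
    rewrite <- (opp_RInt_swap f v u Hf), <- (opp_RInt_swap g v u Hg).
    change (opp ?x) with (- x). rewrite !Rabs_Ropp.
    assert (0 <= RInt f v u) by (apply RInt_ge_0; [lra|auto|intros x Hx; apply H; lra]).
    assert (RInt f v u <= RInt g v u) by (apply RInt_le; [lra|auto|auto|intros x Hx; apply H; lra]).
    rewrite !Rabs_pos_eq; lra.
Qed.

Lemma RInt_diff (f : R -> R) b u v : ex_RInt f b u -> ex_RInt f b v ->
  RInt f b v - RInt f b u = RInt f u v.
Proof.
  intros Hu Hv.
  assert (Huv : ex_RInt f u v) by (apply ex_RInt_Chasles with b; auto; apply ex_RInt_swap; auto).
  rewrite <- (RInt_Chasles f b u v Hu Huv). change (plus ?x ?y) with (x + y). ring.
Qed.

Lemma ex_dom (b : R) G {FG : ProperFilter G} (f g : R -> R) (D : R -> Prop) lg :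
  G D ->
  (forall x, D x -> forall t, Rmin b x <= t <= Rmax b x -> continuous f t) ->
  (forall x y, D x -> D y -> forall t, Rmin x y < t < Rmax x y -> 0 <= f t <= g t) ->
  is_RInt_gen g (at_point b) G lg ->
  ex_RInt_gen f (at_point b) G.
Proof.
  intros HD Hc Hd Hg.
  assert (FG' : Filter G) by (apply filter_filter; auto).
  destruct (@RInt_of_gen _ _ (@filter_filter _ _ (at_point_filter b)) FG' g lg Hg) as [Hex Hlim].
  apply (fp_point b (fun ab => ex_RInt g (fst ab) (snd ab))) in Hex. simpl in Hex.
  apply (fp_point_lim b (fun ab => RInt g (fst ab) (snd ab))) in Hlim. simpl in Hlim.
  assert (Hc' : exists l, filterlim (fun y => RInt f b y) G (locally l)).
  { apply (filterlim_locally_cauchy (F := G)). intros eps.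
    destruct (proj2 (filterlim_locally_cauchy (F := G) (fun y => RInt g b y)) (ex_intro _ lg Hlim) eps)
      as [P [HP HPc]].
    exists (fun y => P y /\ D y /\ ex_RInt g b y). split.
    - apply filter_and; auto. apply filter_and; auto.
    - intros u v [Pu [Du Eu]] [Pv [Dv Ev]].
      specialize (HPc u v Pu Pv).
      unfold ball in HPc |- *; simpl in HPc |- *. unfold AbsRing_ball, abs, minus, plus, opp in HPc |- *; simpl in HPc |- *.
      assert (Fu : ex_RInt f b u) by (apply (ex_RInt_continuous (V:=R_CompleteNormedModule)); apply Hc; auto).
      assert (Fv : ex_RInt f b v) by (apply (ex_RInt_continuous (V:=R_CompleteNormedModule)); apply Hc; auto).
      eapply Rle_lt_trans; [|exact HPc].
      replace (RInt f b v + - RInt f b u) with (RInt f b v - RInt f b u) by ring.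
      replace (RInt g b v + - RInt g b u) with (RInt g b v - RInt g b u) by ring.
      rewrite !RInt_diff; auto.
      apply RInt_abs_dom.
      + apply ex_RInt_Chasles with b; auto; apply ex_RInt_swap; auto.
      + apply ex_RInt_Chasles with b; auto; apply ex_RInt_swap; auto.
      + apply Hd; auto. }
  destruct Hc' as [l Hl]. exists l.
  apply (@gen_of_RInt _ _ (@filter_filter _ _ (at_point_filter b)) FG').
  - apply (fp_point b (fun ab => ex_RInt f (fst ab) (snd ab))). simpl.
    generalize HD; apply filter_imp. intros y Hy. apply (ex_RInt_continuous (V:=R_CompleteNormedModule)). apply Hc; auto.
  - apply (fp_point_lim b (fun ab => RInt f (fst ab) (snd ab))). exact Hl.
Qed.

Definition Fc (a c : R) (s : R) := Rpower s (a - 1) * exp (- s - c / s).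

Lemma exp_mono x y : x <= y -> exp x <= exp y.
Proof. intros [H|H]; [apply Rlt_le, exp_increasing; auto| subst; lra]. Qed.

Lemma ln_nonneg s : 1 <= s -> 0 <= ln s.
Proof. intros [H|H]; [rewrite <- ln_1; apply Rlt_le, ln_increasing; lra| subst; rewrite ln_1; lra]. Qed.

Lemma ln_le_sub1 y : 0 < y -> ln y <= y - 1.
Proof. intros Hy. pose proof (exp_ineq1_le (ln y)). rewrite exp_ln in H; lra. Qed.

Lemma Fc_cont a c s : 0 < s -> continuous (Fc a c) s.
Proof.
  intros Hs. unfold Fc, Rpower. apply (ex_derive_continuous (K:=R_AbsRing) (V:=R_NormedModule)).
  auto_derive. lra.
Qed.

Lemma Fc_pos a c s : 0 < Fc a c s.
Proof. unfold Fc, Rpower. apply Rmult_lt_0_compat; apply exp_pos. Qed.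

Lemma Fc_le1 a c s : 0 <= c -> 0 < s -> Fc a c s <= Rpower s (a - 1).
Proof.
  intros Hc Hs. unfold Fc.
  rewrite <- (Rmult_1_r (Rpower s (a-1))) at 2.
  apply Rmult_le_compat_l. unfold Rpower; apply Rlt_le, exp_pos.
  rewrite <- exp_0. apply exp_mono.
  assert (0 <= c / s) by (apply Rmult_le_pos; auto; apply Rlt_le, Rinv_0_lt_compat; auto). lra.
Qed.

Definition Mc (a : R) := Rabs (a - 1) + 1.
Definition Cc (a : R) := exp (Mc a * (ln (2 * Mc a) - 1)).

Lemma Fc_le2 a c s : 0 <= c -> 1 <= s -> Fc a c s <= Cc a * exp (- s / 2).
Proof.
  intros Hc Hs. unfold Fc, Cc, Rpower. rewrite <- !exp_plus. apply exp_mono.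
  assert (0 <= c / s) by (apply Rmult_le_pos; [auto| apply Rlt_le, Rinv_0_lt_compat; lra]).
  assert (HM : 1 <= Mc a) by (unfold Mc; pose proof (Rabs_pos (a-1)); lra).
  assert (Hl := ln_nonneg s Hs).
  assert (H1 : (a - 1) * ln s <= Mc a * ln s).
  { apply Rmult_le_compat_r; auto. unfold Mc. pose proof (Rle_abs (a-1)); lra. }
  assert (H2 : ln s <= s / (2 * Mc a) - 1 + ln (2 * Mc a)).
  { assert (E : ln s = ln (s / (2 * Mc a)) + ln (2 * Mc a)).
    { rewrite <- ln_mult. f_equal. field. lra. apply Rmult_lt_0_compat; [lra|apply Rinv_0_lt_compat; lra]. lra. }
    rewrite E.
    assert (Hq : 0 < s / (2 * Mc a)) by (apply Rmult_lt_0_compat; [lra|apply Rinv_0_lt_compat; lra]).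
    pose proof (ln_le_sub1 _ Hq). lra. }
  assert (H3 : Mc a * ln s <= Mc a * (s / (2 * Mc a) - 1 + ln (2 * Mc a))).
  { apply Rmult_le_compat_l; lra. }
  replace (Mc a * (s / (2 * Mc a) - 1 + ln (2 * Mc a))) with (s / 2 + Mc a * (ln (2 * Mc a) - 1)) in H3
    by (field; lra).
  lra.
Qed.

Lemma lim_at_point (f : R -> R) x : filterlim f (at_point x) (locally (f x)).
Proof. intros Q HQ. unfold filtermap, at_point. apply locally_singleton; auto. Qed.

Lemma lim_pow0 a : 0 < a -> filterlim (fun y => exp (a * ln y)) (at_right 0) (locally 0).
Proof.
  intros Ha.
  eapply filterlim_comp; [|exact is_lim_exp_m].
  eapply filterlim_comp; [exact is_lim_ln_0|].
  assert (H := filterlim_Rbar_mult_l a m_infty).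
  replace (Rbar_mult a m_infty) with m_infty in H. exact H.
  simpl. destruct (Rle_dec 0 a); [destruct (Rle_lt_or_eq_dec 0 a r); [reflexivity| lra] | lra].
Qed.

Lemma lim_expm_inf : filterlim (fun y => exp (- y / 2)) (Rbar_locally p_infty) (locally 0).
Proof.
  eapply filterlim_comp; [|exact is_lim_exp_m].
  assert (H := filterlim_Rbar_mult_l (-/2) p_infty).
  replace (Rbar_mult (-/2) p_infty) with m_infty in H.
  - eapply filterlim_ext; [|exact H]. intros; simpl; field.
  - simpl. destruct (Rle_dec 0 (-/2)) as [r|r]; [exfalso; lra|reflexivity].
Qed.

Lemma lim_scal_r (f : R -> R) F {FF : Filter F} k :
  filterlim f F (locally 0) -> filterlim (fun y => k * f y) F (locally 0).
Proof.
  intros H. eapply filterlim_comp; [exact H|].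
  assert (C : filterlim (fun x => k * x) (locally 0) (locally (k * 0))).
  { apply (continuous_mult (fun _ => k) (fun x => x)); [apply continuous_const| apply continuous_id]. }
  rewrite Rmult_0_r in C. exact C.
Qed.

Lemma at_right0_pos : at_right 0 (fun y => 0 < y).
Proof. unfold at_right, within. apply filter_forall. auto. Qed.

Lemma at_right0_lt1 : at_right 0 (fun y => 0 < y < 1).
Proof.
  exists (mkposreal 1 Rlt_0_1). intros y Hy Hp. unfold ball in Hy; simpl in Hy.
  unfold AbsRing_ball, abs, minus, plus, opp in Hy; simpl in Hy.
  rewrite Ropp_0, Rplus_0_r in Hy. apply Rabs_def2 in Hy. lra.
Qed.

Lemma g1_int a : 0 < a -> exists l, is_RInt_gen (fun s => Rpower s (a - 1)) (at_point 1) (at_right 0) l.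
Proof.
  intros Ha.
  set (P := fun y => exp (a * ln y) / a).
  assert (HD : forall y, 0 < y -> is_derive P y (Rpower y (a - 1))).
  { intros y Hy. unfold P, Rpower. auto_derive. lra.
    replace ((a - 1) * ln y) with (a * ln y + - ln y) by ring.
    rewrite exp_plus, exp_Ropp, exp_ln by lra. field. lra. }
  assert (Hfp : forall Q : R -> Prop, (forall y, 0 < y -> Q y) -> filter_prod (at_point 1) (at_right 0) (fun ab => forall x, Rmin (fst ab) (snd ab) <= x <= Rmax (fst ab) (snd ab) -> Q x)).
  { intros Q HQ. apply (fp_point 1 (fun ab => forall x, Rmin (fst ab) (snd ab) <= x <= Rmax (fst ab) (snd ab) -> Q x)).
    simpl. generalize at_right0_pos. apply filter_imp. intros y Hy x Hx. apply HQ.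
    destruct Hx as [Hx _]. eapply Rlt_le_trans; [|exact Hx]. apply Rmin_glb_lt; lra. }
  eexists.
  eapply is_RInt_gen_ext; [|apply (is_RInt_gen_Derive P (P 1) 0)].
  - generalize (Hfp (fun x => Derive P x = Rpower x (a - 1)) (fun y Hy => is_derive_unique _ _ _ (HD y Hy))).
    apply filter_imp. intros [u v] H x Hx. apply H. split; apply Rlt_le; apply Hx.
  - apply Hfp. intros y Hy. eexists; apply HD; auto.
  - apply Hfp. intros y Hy. apply continuous_ext_loc with (fun x => Rpower x (a - 1)).
    + exists (mkposreal y Hy). intros z Hz. unfold ball in Hz; simpl in Hz.
      unfold AbsRing_ball, abs, minus, plus, opp in Hz; simpl in Hz. apply Rabs_def2 in Hz.
      symmetry. apply is_derive_unique, HD. lra.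
    + unfold Rpower. apply (ex_derive_continuous (K:=R_AbsRing) (V:=R_NormedModule)). auto_derive. lra.
  - apply lim_at_point.
  - unfold P.
    eapply filterlim_ext; [|apply (@lim_scal_r (fun y => exp (a * ln y)) (at_right 0) _ (/a)); apply lim_pow0; auto].
    intros; simpl. unfold Rdiv. ring.
Qed.

Lemma g2_int C : exists l, is_RInt_gen (fun s => C * exp (- s / 2)) (at_point 1) (Rbar_locally p_infty) l.
Proof.
  set (Q := fun y => - 2 * C * exp (- y / 2)).
  assert (HD : forall y, is_derive Q y (C * exp (- y / 2))).
  { intros y. unfold Q. auto_derive; auto. unfold Rdiv. field. }
  eexists.
  eapply is_RInt_gen_ext; [|apply (is_RInt_gen_Derive Q (Q 1) 0)].
  - apply filter_forall. intros ab x _. apply is_derive_unique, HD.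
  - apply filter_forall. intros ab x _. eexists; apply HD.
  - apply filter_forall. intros ab x _.
    apply continuous_ext with (fun x => C * exp (- x / 2)).
    intros; symmetry; apply is_derive_unique, HD.
    apply (ex_derive_continuous (K:=R_AbsRing) (V:=R_NormedModule)). auto_derive; auto.
  - apply lim_at_point.
  - unfold Q. eapply filterlim_ext; [|apply (@lim_scal_r (fun y => exp (- y / 2)) _ _ (-2 * C)); apply lim_expm_inf].
    intros; simpl; ring.
Qed.

Lemma exFc_right0 a c : 0 < a -> 0 <= c -> ex_RInt_gen (Fc a c) (at_point 1) (at_right 0).
Proof.
  intros Ha Hc. destruct (g1_int a Ha) as [l Hl].
  apply (ex_dom 1 (at_right 0) (Fc a c) (fun s => Rpower s (a - 1)) (fun y => 0 < y < 1) l); auto.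
  - apply at_right0_lt1.
  - intros x Hx t Ht. apply Fc_cont. destruct Ht as [Ht _].
    eapply Rlt_le_trans; [|exact Ht]. apply Rmin_glb_lt; lra.
  - intros x y Hx Hy t Ht.
    assert (0 < t) by (destruct Ht as [Ht _]; eapply Rle_lt_trans; [|exact Ht]; apply Rmin_glb; lra).
    split; [apply Rlt_le, Fc_pos| apply Fc_le1; auto].
Qed.

Lemma exFc_pinf a c : 0 <= c -> ex_RInt_gen (Fc a c) (at_point 1) (Rbar_locally p_infty).
Proof.
  intros Hc. destruct (g2_int (Cc a)) as [l Hl].
  apply (ex_dom 1 (Rbar_locally p_infty) (Fc a c) (fun s => Cc a * exp (- s / 2)) (fun y => 1 < y) l); auto.
  - exists 1. auto.
  - intros x Hx t Ht. apply Fc_cont. destruct Ht as [Ht _].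
    eapply Rlt_le_trans; [|exact Ht]. apply Rmin_glb_lt; lra.
  - intros x y Hx Hy t Ht.
    assert (1 <= t) by (destruct Ht as [Ht _]; left; eapply Rle_lt_trans; [|exact Ht]; apply Rmin_glb; lra).
    split; [apply Rlt_le, Fc_pos| apply Fc_le2; auto].
Qed.

Lemma exFc_seg a c u v : 0 < u -> 0 < v -> ex_RInt (Fc a c) u v.
Proof.
  intros Hu Hv. apply (ex_RInt_continuous (V:=R_CompleteNormedModule)).
  intros z Hz. apply Fc_cont. destruct Hz as [Hz _]. eapply Rlt_le_trans; [|exact Hz].
  apply Rmin_glb_lt; lra.
Qed.

Lemma ex_gen_swap Fa Fb {FFa : Filter Fa} {FFb : Filter Fb} (f : R -> R) :
  ex_RInt_gen f Fa Fb -> ex_RInt_gen f Fb Fa.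
Proof. intros [l H]. exists (opp l). apply is_RInt_gen_swap; auto. Qed.

Lemma exFc_0b a c b : 0 < a -> 0 <= c -> 0 < b -> ex_RInt_gen (Fc a c) (at_right 0) (at_point b).
Proof.
  intros Ha Hc Hb.
  apply (@ex_RInt_gen_Chasles R_NormedModule (at_right 0) (at_point b) (@filter_filter _ _ (at_right_proper_filter 0)) (@filter_filter _ _ (at_point_filter b)) (Fc a c) 1).
  - apply (@ex_gen_swap _ _ (@filter_filter _ _ (at_point_filter 1)) (@filter_filter _ _ (at_right_proper_filter 0))). apply exFc_right0; auto.
  - apply (proj2 (ex_RInt_gen_at_point (V:=R_CompleteNormedModule) _ _ _)). apply exFc_seg; lra.
Qed.

Lemma exFc_binf a c b : 0 <= c -> 0 < b -> ex_RInt_gen (Fc a c) (at_point b) (Rbar_locally p_infty).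
Proof.
  intros Hc Hb.
  apply (@ex_RInt_gen_Chasles R_NormedModule (at_point b) (Rbar_locally p_infty) (@filter_filter _ _ (at_point_filter b)) (@filter_filter _ _ (Rbar_locally_filter p_infty)) (Fc a c) 1).
  - apply (proj2 (ex_RInt_gen_at_point (V:=R_CompleteNormedModule) _ _ _)). apply exFc_seg; lra.
  - apply exFc_pinf; auto.
Qed.

Definition I0 a c b := RInt_gen (Fc a c) (at_right 0) (at_point b).
Definition Iinf a c b := RInt_gen (Fc a c) (at_point b) (Rbar_locally p_infty).
Definition S a c := RInt_gen (Fc a c) (at_right 0) (Rbar_locally p_infty).

Lemma I0_correct a c b : 0 < a -> 0 <= c -> 0 < b -> is_RInt_gen (Fc a c) (at_right 0) (at_point b) (I0 a c b).
Proof.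
  intros. unfold I0. apply (@RInt_gen_correct R_CompleteNormedModule (at_right 0) (at_point b)
    (Proper_StrongProper _ (at_right_proper_filter 0)) (Proper_StrongProper _ (at_point_filter b)) (Fc a c)).
  apply exFc_0b; auto.
Qed.

Lemma Iinf_correct a c b : 0 <= c -> 0 < b -> is_RInt_gen (Fc a c) (at_point b) (Rbar_locally p_infty) (Iinf a c b).
Proof.
  intros. unfold Iinf. apply (@RInt_gen_correct R_CompleteNormedModule (at_point b) (Rbar_locally p_infty)
    (Proper_StrongProper _ (at_point_filter b)) (Proper_StrongProper _ (Rbar_locally_filter p_infty)) (Fc a c)).
  apply exFc_binf; auto.
Qed.

Lemma S_split a c b : 0 < a -> 0 <= c -> 0 < b -> S a c = I0 a c b + Iinf a c b.
Proof.
  intros Ha Hc Hb. unfold S.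
  apply (@is_RInt_gen_unique R_CompleteNormedModule (at_right 0) (Rbar_locally p_infty)
    (Proper_StrongProper _ (at_right_proper_filter 0)) (Proper_StrongProper _ (Rbar_locally_filter p_infty))).
  apply (@is_RInt_gen_Chasles R_NormedModule (at_right 0) (Rbar_locally p_infty)
     (@filter_filter _ _ (at_right_proper_filter 0)) (@filter_filter _ _ (Rbar_locally_filter p_infty)) (Fc a c) b).
  apply I0_correct; auto. apply Iinf_correct; auto.
Qed.

Lemma S_correct a c : 0 < a -> 0 <= c -> is_RInt_gen (Fc a c) (at_right 0) (Rbar_locally p_infty) (S a c).
Proof.
  intros Ha Hc. rewrite (S_split a c 1) by lra.
  apply (@is_RInt_gen_Chasles R_NormedModule (at_right 0) (Rbar_locally p_infty)
     (@filter_filter _ _ (at_right_proper_filter 0)) (@filter_filter _ _ (Rbar_locally_filter p_infty)) (Fc a c) 1).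
  apply I0_correct; auto; lra. apply Iinf_correct; auto; lra.
Qed.

Lemma at_right0_ltb b : 0 < b -> at_right 0 (fun y => 0 < y < b).
Proof.
  intros Hb. exists (mkposreal b Hb). intros y Hy Hp. unfold ball in Hy; simpl in Hy.
  unfold AbsRing_ball, abs, minus, plus, opp in Hy; simpl in Hy.
  rewrite Ropp_0, Rplus_0_r in Hy. apply Rabs_def2 in Hy. lra.
Qed.

Lemma fp_0b b : 0 < b -> filter_prod (at_right 0) (at_point b) (fun ab => fst ab <= snd ab).
Proof.
  intros Hb. exists (fun y => 0 < y < b) (fun y => y = b).
  apply at_right0_ltb; auto. reflexivity. intros x y Hx ->; simpl; lra.
Qed.

Lemma fp_binf b : filter_prod (at_point b) (Rbar_locally p_infty) (fun ab => fst ab <= snd ab).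
Proof.
  exists (fun y => y = b) (fun y => b < y). reflexivity. exists b; auto.
  intros x y -> Hy; simpl; lra.
Qed.

Lemma I0_nonneg a c b : 0 < a -> 0 <= c -> 0 < b -> 0 <= I0 a c b.
Proof.
  intros Ha Hc Hb.
  apply (@is_RInt_gen_ge0 (at_right 0) (at_point b) _ _ (Fc a c)).
  apply fp_0b; auto.
  apply filter_forall. intros; apply Rlt_le, Fc_pos.
  apply I0_correct; auto.
Qed.

Lemma Iinf_nonneg a c b : 0 <= c -> 0 < b -> 0 <= Iinf a c b.
Proof.
  intros Hc Hb.
  apply (@is_RInt_gen_ge0 (at_point b) (Rbar_locally p_infty) _ _ (Fc a c)).
  apply fp_binf.
  apply filter_forall. intros; apply Rlt_le, Fc_pos.
  apply Iinf_correct; auto.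
Qed.

Lemma Fc0_eq a t : Fc a 0 t = Rpower t (a - 1) * exp (- t).
Proof. unfold Fc. f_equal. f_equal. unfold Rdiv. ring. Qed.

Lemma Gamma_S a : 0 < a -> Gamma_fun a = S a 0.
Proof.
  intros Ha. unfold Gamma_fun, S. symmetry.
  apply (@RInt_gen_ext_eq R_CompleteNormedModule (at_right 0) (Rbar_locally p_infty)
     (at_right_proper_filter 0) (Rbar_locally_filter p_infty)).
  intros; apply Fc0_eq.
  exists (S a 0). apply S_correct; auto; lra.
Qed.

Lemma Gamma_pos a : 0 < a -> 0 < Gamma_fun a.
Proof.
  intros Ha. rewrite Gamma_S by auto. rewrite (S_split a 0 1) by lra.
  assert (E : Iinf a 0 1 = RInt (Fc a 0) 1 2 + Iinf a 0 2).
  { unfold Iinf at 1.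
    apply (@is_RInt_gen_unique R_CompleteNormedModule (at_point 1) (Rbar_locally p_infty)
      (Proper_StrongProper _ (at_point_filter 1)) (Proper_StrongProper _ (Rbar_locally_filter p_infty))).
    apply (@is_RInt_gen_Chasles R_NormedModule (at_point 1) (Rbar_locally p_infty)
     (@filter_filter _ _ (at_point_filter 1)) (@filter_filter _ _ (Rbar_locally_filter p_infty)) (Fc a 0) 2).
    - apply is_RInt_gen_at_point. apply (RInt_correct (V:=R_CompleteNormedModule)). apply exFc_seg; lra.
    - apply Iinf_correct; lra. }
  rewrite E.
  assert (0 < RInt (Fc a 0) 1 2).
  { apply RInt_gt_0. lra. intros; apply Fc_pos. intros; apply Fc_cont; lra. }
  pose proof (I0_nonneg a 0 1 Ha (Rle_refl 0) Rlt_0_1).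
  pose proof (Iinf_nonneg a 0 2 (Rle_refl 0) Rlt_0_2).
  lra.
Qed.

Lemma lim_exp_pinf b : 0 < b -> filterlim (fun t => b * exp t) (Rbar_locally p_infty) (Rbar_locally p_infty).
Proof.
  intros Hb. eapply filterlim_comp; [exact is_lim_exp_p|].
  assert (H := filterlim_Rbar_mult_l b p_infty).
  replace (Rbar_mult b p_infty) with p_infty in H. exact H.
  simpl. destruct (Rle_dec 0 b) as [r|r]; [destruct (Rle_lt_or_eq_dec 0 b r); [reflexivity| exfalso; lra] | exfalso; lra].
Qed.

Lemma lim_expm_inf1 : filterlim (fun y => exp (- y)) (Rbar_locally p_infty) (locally 0).
Proof.
  eapply filterlim_comp; [|exact is_lim_exp_m].
  assert (H := filterlim_Rbar_mult_l (-1) p_infty).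
  replace (Rbar_mult (-1) p_infty) with m_infty in H.
  - eapply filterlim_ext; [|exact H]. intros; simpl; ring.
  - simpl. destruct (Rle_dec 0 (-1)) as [r|r]; [exfalso; lra|reflexivity].
Qed.

Lemma lim_expm_right0 b : 0 < b -> filterlim (fun t => b * exp (- t)) (Rbar_locally p_infty) (at_right 0).
Proof.
  intros Hb P HP. unfold filtermap.
  assert (H := @lim_scal_r (fun y => exp (- y)) (Rbar_locally p_infty) _ b lim_expm_inf1).
  specialize (H _ HP). unfold filtermap in H. generalize H. apply filter_imp.
  intros t Ht. apply Ht. apply Rmult_lt_0_compat; auto; apply exp_pos.
Qed.

Lemma key_arg z t : 0 < z -> - (z / 2 * exp t) - (z ^ 2 / 4) / (z / 2 * exp t) = - z * ch t.
Proof.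
  intros Hz. unfold ch. rewrite exp_Ropp. pose proof (exp_pos t). field. lra.
Qed.

Lemma key_pow b nu t X : 0 < b ->
  b * exp t * (Rpower (b * exp t) (nu - 1) * X) = Rpower b nu * exp (nu * t) * X.
Proof.
  intros Hb. unfold Rpower.
  rewrite ln_mult, ln_exp by (auto; apply exp_pos).
  replace (b * exp t) with (exp (ln b + t)) at 1 by (rewrite exp_plus, exp_ln; auto).
  rewrite <- Rmult_assoc. f_equal. rewrite <- !exp_plus. f_equal. ring.
Qed.

Lemma key1 nu z t : 0 < z ->
  z / 2 * exp t * Fc nu (z ^ 2 / 4) (z / 2 * exp t) = Rpower (z / 2) nu * exp (nu * t) * exp (- z * ch t).
Proof.
  intros Hz. unfold Fc. rewrite key_arg by auto. apply key_pow. lra.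
Qed.

Lemma key2 nu z t : 0 < z ->
  z / 2 * exp (- t) * Fc nu (z ^ 2 / 4) (z / 2 * exp (- t)) = Rpower (z / 2) nu * exp (- nu * t) * exp (- z * ch t).
Proof.
  intros Hz. unfold Fc. rewrite key_arg by auto.
  assert (Ech : ch (- t) = ch t) by (unfold ch; rewrite Ropp_involutive; field).
  rewrite Ech.
  rewrite key_pow by lra. f_equal. f_equal. f_equal. ring.
Qed.

Lemma bessel nu z : 0 < nu -> 0 < z ->
  BesselK nu z = / (2 * Rpower (z / 2) nu) * S nu (z ^ 2 / 4).
Proof.
  intros Hnu Hz.
  set (b := z / 2). set (c := z ^ 2 / 4).
  assert (Hb : 0 < b) by (unfold b; lra).
  assert (Hc : 0 <= c) by (unfold c; pose proof (pow2_ge_0 z); lra).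
  assert (FP0 : Filter (at_point 0)) by apply (@filter_filter _ _ (at_point_filter 0)).
  assert (FPb : Filter (at_point b)) by apply (@filter_filter _ _ (at_point_filter b)).
  assert (FPi : Filter (Rbar_locally p_infty)) by apply (@filter_filter _ _ (Rbar_locally_filter p_infty)).
  assert (FR0 : Filter (at_right 0)) by apply (@filter_filter _ _ (at_right_proper_filter 0)).
  assert (A1 : is_RInt_gen (fun t => b * exp t * Fc nu c (b * exp t)) (at_point 0) (Rbar_locally p_infty) (Iinf nu c b)).
  { apply (@gen_subst (at_point 0) (Rbar_locally p_infty) (at_point b) (Rbar_locally p_infty) FP0 FPi FPb FPi
      (Fc nu c) (fun t => b * exp t) (fun t => b * exp t)).
    - intros P HP. unfold filtermap, at_point in *. rewrite exp_0, Rmult_1_r. exact HP.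
    - apply lim_exp_pinf; auto.
    - apply filter_forall. intros ab x _. split; [|split].
      + apply Fc_cont. apply Rmult_lt_0_compat; auto; apply exp_pos.
      + auto_derive; auto. ring.
      + apply (ex_derive_continuous (K:=R_AbsRing) (V:=R_NormedModule)). auto_derive; auto.
    - apply Iinf_correct; auto. }
  assert (A2 : is_RInt_gen (fun t => - (b * exp (- t)) * Fc nu c (b * exp (- t))) (at_point 0) (Rbar_locally p_infty) (opp (I0 nu c b))).
  { apply (@gen_subst (at_point 0) (Rbar_locally p_infty) (at_point b) (at_right 0) FP0 FPi FPb FR0
      (Fc nu c) (fun t => b * exp (- t)) (fun t => - (b * exp (- t)))).
    - intros P HP. unfold filtermap, at_point in *. rewrite Ropp_0, exp_0, Rmult_1_r. exact HP.
    - apply lim_expm_right0; auto.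
    - apply filter_forall. intros ab x _. split; [|split].
      + apply Fc_cont. apply Rmult_lt_0_compat; auto; apply exp_pos.
      + auto_derive; auto. ring.
      + apply (ex_derive_continuous (K:=R_AbsRing) (V:=R_NormedModule)). auto_derive; auto.
    - apply (@is_RInt_gen_swap R_NormedModule (at_point b) (at_right 0) FPb FR0). apply I0_correct; auto. }
  assert (A3 := @is_RInt_gen_minus R_NormedModule _ _ FP0 FPi _ _ _ _ A1 A2).
  assert (A4 := @is_RInt_gen_scal R_NormedModule _ _ FP0 FPi _ (/ (2 * Rpower b nu)) _ A3).
  unfold BesselK.
  apply (@is_RInt_gen_unique R_CompleteNormedModule (at_point 0) (Rbar_locally p_infty)
      (Proper_StrongProper _ (at_point_filter 0)) (Proper_StrongProper _ (Rbar_locally_filter p_infty))).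
  replace (/ (2 * Rpower b nu) * S nu c) with
    (scal (/ (2 * Rpower b nu)) (minus (Iinf nu c b) (opp (I0 nu c b)))).
  2:{ unfold b, c. rewrite (S_split nu (z ^ 2 / 4) (z / 2)) by (try exact Hc; try exact Hb; auto). change (scal ?x ?y) with (x * y).
      change (minus ?x ?y) with (x - y). change (opp ?x) with (- x). f_equal. ring. }
  eapply (@is_RInt_gen_ext R_NormedModule _ _ FP0 FPi); [|exact A4].
  apply filter_forall. intros ab t _.
  change (scal ?x ?y) with (x * y). change (minus ?x ?y) with (x - y).
  unfold b, c. rewrite key1 by auto.
  replace (- (z / 2 * exp (- t)) * Fc nu (z ^ 2 / 4) (z / 2 * exp (- t))) with
    (- (z / 2 * exp (- t) * Fc nu (z ^ 2 / 4) (z / 2 * exp (- t)))) by ring.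
  rewrite key2 by auto.
  assert (0 < Rpower (z / 2) nu) by (unfold Rpower; apply exp_pos).
  replace (ch (nu * t)) with ((exp (nu * t) + exp (- (nu * t))) / 2) by reflexivity. replace (- nu * t) with (- (nu * t)) by ring. match goal with |- ?x = ?y => change (@eq R x y) end. field. lra.
Qed.

Lemma rp_alg z nu : 0 < z -> Rpower 2 (1 - nu) * Rpower z nu = 2 * Rpower (z / 2) nu.
Proof.
  intros Hz. unfold Rpower. unfold Rdiv. rewrite ln_mult, ln_Rinv by lra.
  rewrite <- !exp_plus.
  replace (2 * exp (nu * (ln z + - ln 2))) with (exp (ln 2) * exp (nu * (ln z + - ln 2))) by (rewrite exp_ln; lra).
  rewrite <- !exp_plus. f_equal. ring.
Qed.

Lemma fp_0b_all b (P : R -> Prop) : 0 < b -> (forall x, 0 < x -> P x) ->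
  filter_prod (at_right 0) (at_point b) (fun ab => forall x, Rmin (fst ab) (snd ab) <= x <= Rmax (fst ab) (snd ab) -> P x).
Proof.
  intros Hb HP. exists (fun y => 0 < y < b) (fun y => y = b).
  apply at_right0_ltb; auto. reflexivity.
  intros x y Hx ->; simpl. intros t Ht. apply HP.
  rewrite Rmin_left in Ht by lra. lra.
Qed.

Lemma fp_0b_all' b (P : R -> Prop) : 0 < b -> (forall x, 0 < x -> P x) ->
  filter_prod (at_right 0) (at_point b) (fun ab => forall x, Rmin (fst ab) (snd ab) < x < Rmax (fst ab) (snd ab) -> P x).
Proof.
  intros Hb HP. generalize (fp_0b_all b P Hb HP). apply filter_imp.
  intros ab H x Hx. apply H; lra.
Qed.

Lemma fp_0b_mix b (P : R -> Prop) : 0 < b -> (forall x, 0 < x -> P x) ->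
  filter_prod (at_right 0) (at_point b) (fun ab => forall x, fst ab <= x <= snd ab -> P x).
Proof.
  intros Hb HP. exists (fun y => 0 < y < b) (fun y => y = b).
  apply at_right0_ltb; auto. reflexivity.
  intros x y Hx ->; simpl. intros t Ht. apply HP. lra.
Qed.

Section T2.
Variables (a2 n2 x2 : R) (ha2 : 0 < a2) (hn2 : 0 < n2) (hx2 : 0 < x2).

Definition T2 h := matern h a2 n2
          - / Gamma_fun n2 * gen_inc_gamma n2 (/ (4 * x2 * a2 ^ 2)) (h ^ 2 / (4 * a2 ^ 2)).

Lemma T2_eq h : 0 <= h -> T2 h = / Gamma_fun n2 * I0 n2 (h ^ 2 / (4 * a2 ^ 2)) (/ (4 * x2 * a2 ^ 2)).
Proof.
  intros Hh. unfold T2.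
  set (b := / (4 * x2 * a2 ^ 2)). set (c := h ^ 2 / (4 * a2 ^ 2)).
  assert (Hb : 0 < b) by (unfold b; apply Rinv_0_lt_compat; pose proof (pow_lt a2 2 ha2); nra).
  assert (Hc : 0 <= c) by (unfold c; apply Rmult_le_pos; [apply pow2_ge_0| apply Rlt_le, Rinv_0_lt_compat; pose proof (pow_lt a2 2 ha2); lra]).
  change (gen_inc_gamma n2 b c) with (Iinf n2 c b).
  assert (HG := Gamma_pos n2 hn2).
  assert (HGS := Gamma_S n2 hn2).
  unfold matern. destruct (Req_EM_T h 0) as [E|E].
  - assert (c = 0) by (unfold c; rewrite E; unfold Rdiv; ring).
    rewrite H. rewrite (S_split n2 0 b) in HGS by (auto; lra).
    rewrite HGS. rewrite HGS in HG. field. lra.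
  - assert (Hz : 0 < h / a2) by (apply Rmult_lt_0_compat; [lra| apply Rinv_0_lt_compat; auto]).
    rewrite bessel by auto.
    replace ((h / a2) ^ 2 / 4) with c by (unfold c; field; lra).
    rewrite (S_split n2 c b) by auto.
    assert (HR := rp_alg (h / a2) n2 Hz).
    assert (0 < Rpower (h / a2 / 2) n2) by (unfold Rpower; apply exp_pos).
    replace (Rpower 2 (1 - n2) / Gamma_fun n2 * Rpower (h / a2) n2 *
      (/ (2 * Rpower (h / a2 / 2) n2) * (I0 n2 c b + Iinf n2 c b)))
      with ((Rpower 2 (1 - n2) * Rpower (h / a2) n2) / Gamma_fun n2 *
      (/ (2 * Rpower (h / a2 / 2) n2) * (I0 n2 c b + Iinf n2 c b))) by (unfold Rdiv; ring).
    rewrite HR. field. lra.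
Qed.

Lemma T2_PD : PD T2.
Proof.
  set (b := / (4 * x2 * a2 ^ 2)).
  assert (Hb : 0 < b) by (unfold b; apply Rinv_0_lt_compat; pose proof (pow_lt a2 2 ha2); nra).
  assert (HG := Gamma_pos n2 hn2).
  apply (@mixture (at_right 0) (at_point b) (at_right_proper_filter 0) (at_point_filter b)
     (fun s => / Gamma_fun n2 * (Rpower s (n2 - 1) * exp (- s)))
     (fun s => / (4 * a2 ^ 2 * s))).
  - apply fp_0b; auto.
  - apply fp_0b_mix; auto. intros x Hx. split.
    + apply Rmult_le_pos. apply Rlt_le, Rinv_0_lt_compat; auto.
      apply Rmult_le_pos; unfold Rpower; apply Rlt_le, exp_pos.
    + apply Rlt_le, Rinv_0_lt_compat. pose proof (pow_lt a2 2 ha2). nra.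
  - intros h Hh. rewrite T2_eq by auto. fold b.
    assert (Hc : 0 <= h ^ 2 / (4 * a2 ^ 2)) by (apply Rmult_le_pos; [apply pow2_ge_0| apply Rlt_le, Rinv_0_lt_compat; pose proof (pow_lt a2 2 ha2); lra]).
    assert (H := I0_correct n2 _ b hn2 Hc Hb).
    assert (H2 := @is_RInt_gen_scal' (at_right 0) (at_point b) (@filter_filter _ _ (at_right_proper_filter 0))
                   (@filter_filter _ _ (at_point_filter b)) (/ Gamma_fun n2) _ _ H).
    eapply (@is_RInt_gen_ext R_NormedModule _ _ (@filter_filter _ _ (at_right_proper_filter 0))
                   (@filter_filter _ _ (at_point_filter b))); [|exact H2].
    apply fp_0b_all'; auto. intros x Hx. unfold Fc.
    rewrite Rmult_assoc. f_equal. rewrite Rmult_assoc. f_equal.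
    rewrite <- exp_plus. f_equal. field. split; lra.
Qed.
End T2.

Lemma lim_scale_right0 l : 0 < l -> filterlim (fun t => l * t) (at_right 0) (at_right 0).
Proof.
  intros Hl P [eps Heps]. unfold filtermap.
  assert (He : 0 < eps / l) by (apply Rmult_lt_0_compat; [apply cond_pos| apply Rinv_0_lt_compat; auto]).
  exists (mkposreal _ He). intros y Hy Hp. apply Heps.
  - unfold ball in Hy |- *; simpl in Hy |- *.
    unfold AbsRing_ball, abs, minus, plus, opp in Hy |- *; simpl in Hy |- *.
    rewrite Ropp_0, Rplus_0_r in Hy |- *. rewrite Rabs_pos_eq in Hy |- * by nra.
    apply Rmult_lt_compat_l with (r := l) in Hy; auto.
    replace (l * (eps / l)) with (pos eps) in Hy by (field; lra). exact Hy.
  - nra.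
Qed.

Section T1.
Variables (a1 n1 x1 : R) (ha1 : 0 < a1) (hn1 : 0 < n1) (hx1 : 0 < x1).

Definition T1 h := lower_gamma (n1 / 2) ((h ^ 2 + a1) * x1) / Gamma_fun (n1 / 2) * Defs.cauchy h a1 n1.

Lemma T1_PD : PD T1.
Proof.
  set (A := n1 / 2).
  assert (HA : 0 < A) by (unfold A; lra).
  assert (HG := Gamma_pos A HA).
  assert (FR0 : Filter (at_right 0)) by apply (@filter_filter _ _ (at_right_proper_filter 0)).
  assert (FPx : Filter (at_point x1)) by apply (@filter_filter _ _ (at_point_filter x1)).
  apply (@mixture (at_right 0) (at_point x1) (at_right_proper_filter 0) (at_point_filter x1)
     (fun t => Rpower a1 A / Gamma_fun A * (Rpower t (A - 1) * exp (- a1 * t)))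
     (fun t => t)).
  - apply fp_0b; auto.
  - apply fp_0b_mix; auto. intros x Hx. split; [|lra].
    apply Rmult_le_pos. apply Rmult_le_pos. unfold Rpower; apply Rlt_le, exp_pos.
    apply Rlt_le, Rinv_0_lt_compat; auto.
    apply Rmult_le_pos; unfold Rpower; apply Rlt_le, exp_pos.
  - intros h Hh.
    set (l := h ^ 2 + a1).
    assert (Hl : 0 < l) by (unfold l; pose proof (pow2_ge_0 h); lra).
    assert (Hlx : 0 < l * x1) by (apply Rmult_lt_0_compat; auto).
    assert (E1 : lower_gamma A (l * x1) = I0 A 0 (l * x1)).
    { unfold lower_gamma, I0.
      apply (@RInt_gen_ext_eq R_CompleteNormedModule (at_right 0) (at_point (l * x1))
        (at_right_proper_filter 0) (at_point_filter _)).
      intros x; symmetry; exact (Fc0_eq A x).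
      apply (@ex_RInt_gen_ext_eq R_NormedModule (at_right 0) (at_point (l * x1)) FR0 (@filter_filter _ _ (at_point_filter _)) (Fc A 0)).
      intros x; exact (Fc0_eq A x). apply exFc_0b; [exact HA| apply Rle_refl| exact Hlx]. }
    assert (Hs : is_RInt_gen (fun t => l * Fc A 0 (l * t)) (at_right 0) (at_point x1) (I0 A 0 (l * x1))).
    { apply (@gen_subst (at_right 0) (at_point x1) (at_right 0) (at_point (l * x1)) FR0 FPx
        (@filter_filter _ _ (at_right_proper_filter 0)) (@filter_filter _ _ (at_point_filter _))
        (Fc A 0) (fun t => l * t) (fun _ => l)).
      - apply lim_scale_right0; auto.
      - intros P HP. exact HP.
      - apply fp_0b_all; auto. intros x Hx. split; [|split].
        + apply Fc_cont. apply Rmult_lt_0_compat; auto.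
        + auto_derive; auto. ring.
        + apply continuous_const.
      - apply I0_correct; [exact HA| apply Rle_refl| exact Hlx]. }
    assert (HlA : 0 < Rpower l A) by (unfold Rpower; apply exp_pos).
    set (k := Rpower a1 A / (Gamma_fun A * Rpower l A)).
    assert (H2 := @is_RInt_gen_scal' (at_right 0) (at_point x1) FR0 FPx k _ _ Hs).
    replace (T1 h) with (k * I0 A 0 (l * x1)).
    2:{ unfold T1, Defs.cauchy. fold A. fold l. rewrite E1.
        replace (1 + h ^ 2 / a1) with (l / a1) by (unfold l; field; lra).
        replace (- n1 / 2) with (- A) by (unfold A; field).
        unfold k. unfold Rpower at 3. unfold Rdiv at 3. rewrite ln_mult, ln_Rinv by (auto; apply Rinv_0_lt_compat; auto).
        replace (- A * (ln l + - ln a1)) with (A * ln a1 + - (A * ln l)) by ring.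
        rewrite exp_plus, exp_Ropp. unfold Rpower. field. split; [apply Rgt_not_eq, exp_pos| lra]. }
    eapply (@is_RInt_gen_ext R_NormedModule _ _ FR0 FPx); [|exact H2].
    apply fp_0b_all'; auto. intros t Ht. unfold k, Fc.
    unfold Rpower. rewrite ln_mult by auto.
    replace (- (l * t) - 0 / (l * t)) with (- a1 * t + - t * h ^ 2) by (unfold Rdiv; rewrite Rmult_0_l; unfold l; ring).
    replace ((A - 1) * (ln l + ln t)) with (A * ln l + - ln l + (A - 1) * ln t) by ring.
    rewrite !exp_plus, exp_Ropp, exp_ln by auto.
    assert (0 < exp (A * ln l)) by apply exp_pos.
    match goal with |- ?x = ?y => change (@eq R x y) end.
    field. repeat split; lra.
Qed.
End T1.

Theorem proposition1 (a1 n1 a2 n2 w1 w2 x1 x2 : R)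
  (ha1 : 0 < a1) (hn1 : 0 < n1) (ha2 : 0 < a2) (hn2 : 0 < n2)
  (hw1 : 0 < w1) (hw2 : 0 < w2) (hx1 : 0 < x1) (hx2 : 0 < x2) :
  forall (d k : nat) (a : nat -> R) (s : nat -> nat -> R),
    0 <= fsum k (fun i => fsum k (fun j =>
           a i * a j * phiCM a1 n1 a2 n2 w1 w2 x1 x2 (eucl_dist d (s i) (s j)))).
Proof.
  assert (H : PD (phiCM a1 n1 a2 n2 w1 w2 x1 x2)).
  { apply (PD_ext (fun h => w1 * T1 a1 n1 x1 h + w2 * T2 a2 n2 x2 h)).
    - intros h _. unfold phiCM, T1, T2. ring.
    - apply PD_plus; apply PD_scal; try lra.
      + apply T1_PD; auto.
      + apply T2_PD; auto. }
  exact H.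
Qed.
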